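(* Let $d=2$ and let costs be Euclidean. For any constant $M>0$, there exist two linear classifiers $h_1,h_2:\mathbb R^2\to\{0,1\}$ and an initial feature vector $x^{(0)}\in\mathbb R^2$ such that $$\frac{c^*_{\mathrm{conj}}(x^{(0)},\{h_1,h_2\})}{c^*_{\mathrm{seq}}(x^{(0)},\{h_1,h_2\})}\ge M.$$
   Context: A linear classifier is $h(x)=\mathbf 1[w^\top x\ge b]$. For classifiers $h_1,\dots,h_k$ and cost $c(x,\hat x)=\|\hat x-x\|_2$: the sequential manipulation cost is $c^*_{\mathrm{seq}}(x^{(0)},\{h_1,\dots,h_k\})=\min\{\sum_{i=0}^{k-1}c(x^{(i)},x^{(i+1)}):x^{(1)},\dots,x^{(k)}\text{ with }h_i(x^{(i)})=1\ \forall i\}$; the conjunction manipulation cost is $c^*_{\mathrm{conj}}(x,\{h_1,\dots,h_k\})=\min\{c(x,z):h_i(z)=1\ \forall i\}$. *)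

(* Defs.v *)
From Stdlib Require Import Reals.
Open Scope R_scope.

Definition vec2 := (R * R)%type.

Definition dot (w x : vec2) : R := fst w * fst x + snd w * snd x.

Definition cost (x x' : vec2) : R :=
  sqrt ((fst x' - fst x) ^ 2 + (snd x' - snd x) ^ 2).

Definition lin_clf (w : vec2) (b : R) (x : vec2) : bool :=
  if Rle_dec b (dot w x) then true else false.

Definition is_min (S : R -> Prop) (m : R) : Prop :=
  S m /\ forall s, S s -> m <= s.

Definition seq_costs (h1 h2 : vec2 -> bool) (x0 : vec2) (c : R) : Prop :=
  exists x1 x2 : vec2, h1 x1 = true /\ h2 x2 = true /\
    c = cost x0 x1 + cost x1 x2.

Definition conj_costs (h1 h2 : vec2 -> bool) (x0 : vec2) (c : R) : Prop :=
  exists z : vec2, h1 z = true /\ h2 z = true /\ c = cost x0 z.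

(* Main.v *)
Require Import Defs.
From Stdlib Require Import Reals Lra Psatz.
Open Scope R_scope.

Lemma absb_le (a b : R) : Rabs b <= sqrt (a ^ 2 + b ^ 2).
Proof.
  rewrite <- sqrt_Rsqr_abs. apply sqrt_le_1_alt. unfold Rsqr. nra.
Qed.

Lemma clf_true w b x : lin_clf w b x = true -> b <= dot w x.
Proof. unfold lin_clf. destruct (Rle_dec b (dot w x)); auto; discriminate. Qed.

Lemma clf_intro w b x : b <= dot w x -> lin_clf w b x = true.
Proof. unfold lin_clf. destruct (Rle_dec b (dot w x)); auto; contradiction. Qed.

Theorem mainTheorem12 :
  forall M : R, 0 < M ->
  exists (w1 w2 : vec2) (b1 b2 : R) (x0 : vec2) (cconj cseq : R),
    is_min (conj_costs (lin_clf w1 b1) (lin_clf w2 b2) x0) cconj /\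
    is_min (seq_costs (lin_clf w1 b1) (lin_clf w2 b2) x0) cseq /\
    0 < cseq /\
    cconj / cseq >= M.
Proof.
  intros M HM.
  exists (1, -M), (0, 1), 0, 1, (0, 0), (sqrt (M ^ 2 + 1)), 1.
  split; [split|split; [split|split]].
  - exists (M, 1). split; [|split].
    + apply clf_intro. unfold dot; simpl; lra.
    + apply clf_intro. unfold dot; simpl; lra.
    + unfold cost; cbn [fst snd]. f_equal; ring.
  - intros s [[z1 z2] [H1 [H2 ->]]].
    apply clf_true in H1. apply clf_true in H2. unfold dot in *; simpl in *.
    unfold cost; cbn [fst snd]. apply sqrt_le_1_alt.
    assert (M <= z1) by nra. nra.
  - exists (0, 0), (0, 1). split; [|split].
    + apply clf_intro. unfold dot; simpl; lra.
    + apply clf_intro. unfold dot; simpl; lra.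
    + unfold cost; cbn [fst snd].
      replace ((0 - 0) ^ 2 + (0 - 0) ^ 2) with 0 by ring.
      replace ((0 - 0) ^ 2 + (1 - 0) ^ 2) with 1 by ring.
      rewrite ?sqrt_0, ?sqrt_1. ring.
  - intros s [[a1 a2] [[c1 c2] [H1 [H2 ->]]]].
    apply clf_true in H2. unfold dot in *; simpl in *.
    unfold cost; cbn [fst snd].
    pose proof (absb_le (a1 - 0) (a2 - 0)).
    pose proof (absb_le (c1 - a1) (c2 - a2)).
    pose proof (Rle_abs (a2 - 0)). pose proof (Rle_abs (c2 - a2)). lra.
  - lra.
  - unfold Rdiv. rewrite Rinv_1, Rmult_1_r.
    apply Rle_ge. apply Rle_trans with (sqrt (M ^ 2)).
    + rewrite sqrt_pow2; lra.
    + apply sqrt_le_1_alt; lra.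
Qed.
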